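(* For $n=0,1,2,\ldots$ let $\bar H^{(2)}_n=\sum_{0<j\leqslant n}\frac{1}{(2j-1)^2}$. For every real $x$ with $0\leqslant x<2$, $$\sum_{k=1}^\infty\binom{2k}k\bar H_k^{(2)}\left(\frac x4\right)^{2k}=\frac{\arcsin^2(x/2)}{\sqrt{4-x^2}}.$$ In particular, $$\sum_{k=1}^\infty\binom{2k}k\frac{\bar H_k^{(2)}}{16^k}=\frac{\pi^2}{36\sqrt3},\qquad \sum_{k=1}^\infty\binom{2k}k\frac{\bar H_k^{(2)}}{8^k}=\frac{\pi^2}{16\sqrt2},\qquad \sum_{k=1}^\infty\binom{2k}k\frac{3^k\bar H_k^{(2)}}{16^k}=\frac{\pi^2}9.$$ *)

(* Defs.v *)
From Stdlib Require Export Reals.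
Open Scope R_scope.

Fixpoint Hbar2 (n : nat) : R :=
  match n with
  | O => 0
  | S m => Hbar2 m + 1 / (2 * INR (S m) - 1) ^ 2
  end.

Definition term (x : R) (k : nat) : R :=
  C (2 * k) k * Hbar2 k * (x / 4) ^ (2 * k).

(* Main.v *)
Require Import Defs.
From Stdlib Require Import Reals Lra Lia.
From Coquelicot Require Import Coquelicot.
From Stdlib Require Import Binomial.
Open Scope R_scope.

Definition bb (k : nat) : R := C (2 * k) k / 4 ^ k.
Definition cc (k : nat) : R := bb k / (2 * INR k + 1).
Definition aa (k : nat) : R := bb k * Hbar2 k.

Lemma C_rec k : C (2 * S k) (S k) = C (2 * k) k * ((2 * INR k + 1) * (2 * INR k + 2)) / (INR k + 1) ^ 2.
Proof.
  unfold C.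
  replace (2 * S k - S k)%nat with (S k) by lia.
  replace (2 * k - k)%nat with k by lia.
  replace (2 * S k)%nat with (S (S (2 * k))) by lia.
  rewrite !fact_simpl, !mult_INR, !S_INR, mult_INR. simpl (INR 2).
  assert (H1 : INR (Factorial.fact k) <> 0) by (apply INR_fact_neq_0).
  assert (H2 : INR (Factorial.fact (2*k)) <> 0) by (apply INR_fact_neq_0).
  assert (H3 : INR k + 1 <> 0) by (pose proof (pos_INR k); lra).
  field. auto.
Qed.

Lemma bb_S k : bb (S k) = bb k * (2 * INR k + 1) / (2 * INR k + 2).
Proof.
  unfold bb. rewrite C_rec. simpl pow.
  assert (H3 : INR k + 1 <> 0) by (pose proof (pos_INR k); lra).
  assert (H4 : 4 ^ k <> 0) by (apply pow_nonzero; lra).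
  field. split; auto. lra.
Qed.

Lemma bb_0 : bb 0 = 1.
Proof. unfold bb, C. simpl. field. Qed.

Lemma bb_bounds k : 0 < bb k <= 1.
Proof.
  induction k. rewrite bb_0; lra.
  rewrite bb_S. pose proof (pos_INR k).
  split. apply Rdiv_lt_0_compat; nra.
  apply Rle_trans with (bb k); [|lra].
  apply Rmult_le_reg_r with (2 * INR k + 2). lra.
  unfold Rdiv. rewrite Rmult_assoc, Rinv_l by lra. nra.
Qed.

Lemma aux_ineq y : 1 <= y -> 2 / (y + 2) <= (2 * y - 1) / y ^ 2.
Proof.
  intro Hy.
      replace (2 / (y + 2)) with ((2 * y ^ 2) * / ((y + 2) * y ^ 2)) by (field; lra).
      replace ((2 * y - 1) / y ^ 2) with (((2 * y - 1) * (y + 2)) * / ((y + 2) * y ^ 2)) by (field; lra).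
      apply Rmult_le_compat_r. apply Rlt_le, Rinv_0_lt_compat. apply Rmult_lt_0_compat; [lra|apply pow_lt; lra].
      nra.
Qed.

Lemma Hbar2_bounds k : 0 <= Hbar2 k <= 2 - 2 / (2 * INR k + 1).
Proof.
  induction k. simpl. lra.
  change (Hbar2 (S k)) with (Hbar2 k + 1 / (2 * INR (S k) - 1) ^ 2). rewrite S_INR. pose proof (pos_INR k).
  replace (2 * (INR k + 1) - 1) with (2 * INR k + 1) by ring.
  assert (0 < 2 * INR k + 1) by lra.
  split.
  - assert (0 <= 1 / (2 * INR k + 1) ^ 2). apply Rlt_le, Rdiv_lt_0_compat; [lra|apply pow_lt; lra]. lra.
  - apply Rle_trans with (2 - 2 / (2 * INR k + 1) + 1 / (2 * INR k + 1) ^ 2). lra.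
    assert (2 / (2 * (INR k + 1) + 1) <= 2 / (2 * INR k + 1) - 1 / (2 * INR k + 1) ^ 2).
    { replace (2 / (2 * INR k + 1) - 1 / (2 * INR k + 1) ^ 2) with ((4 * INR k + 1)/ (2 * INR k + 1) ^ 2) by (field; lra).
      replace (2 * (INR k + 1) + 1) with ((2 * INR k + 1) + 2) by ring.
      replace (4 * INR k + 1) with (2 * (2 * INR k + 1) - 1) by ring.
      apply aux_ineq. lra. }
    lra.
Qed.

Lemma rad_ge1 (p : nat -> R) : (forall n, Rabs (p n) <= 2) -> Rbar_le 1 (CV_radius p).
Proof.
  intro H. destruct (CV_radius_bounded p) as [Hub _]. apply Hub. exists 2. intro n.
  rewrite pow1, Rmult_1_r. auto.
Qed.

Lemma in_rad (p : nat -> R) x : (forall n, Rabs (p n) <= 2) -> Rabs x < 1 -> Rbar_lt (Rabs x) (CV_radius p).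
Proof.
  intros H Hx. eapply Rbar_lt_le_trans; [|apply rad_ge1; exact H]. simpl. exact Hx.
Qed.

Lemma PS_lin3 (p q s r : nat -> R) (al be ga x : R) :
  ex_pseries p x -> ex_pseries q x -> ex_pseries s x ->
  (forall n, r n = al * p n + be * q n + ga * s n) ->
  PSeries r x = al * PSeries p x + be * PSeries q x + ga * PSeries s x.
Proof.
  intros Hp Hq Hs Hr. apply is_pseries_unique.
  apply PSeries_correct in Hp, Hq, Hs. unfold is_pseries in *.
  pose proof (is_series_plus _ _ _ _ (is_series_plus _ _ _ _ (is_series_scal_l al _ _ Hp) (is_series_scal_l be _ _ Hq)) (is_series_scal_l ga _ _ Hs)) as H.
  eapply is_series_ext; [|exact H].
  intro n. rewrite Hr. unfold scal, plus. simpl. unfold mult. simpl. rewrite !pow_n_pow. ring.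
Qed.

Lemma const0 (f : R -> R) : (forall x, -1 < x < 1 -> is_derive f x 0) -> forall t, -1 < t < 1 -> f t = f 0.
Proof.
  intros Hd t Ht.
  assert (Hc : forall y, -1 < y < 1 -> continuity_pt f y).
  { intros y Hy. apply continuity_pt_filterlim. apply (@ex_derive_continuous R_AbsRing R_NormedModule f y). eexists. apply Hd. exact Hy. }
  assert (Hc2 : forall y : R, continuity_pt (fun _ => 0) y) by (intro; apply continuity_pt_const; intros ? ?; reflexivity).
  destruct (Rtotal_order t 0) as [Hlt|[Heq|Hgt]].
  - destruct (fn_eq_Derive_eq f (fun _ => 0) t 0) as [K HK]; auto.
    + apply Hc; lra.
    + intros y Hy. eexists. apply Hd. lra.
    + intros y Hy. apply ex_derive_const.
    + intros y Hy. rewrite Derive_const. apply is_derive_unique, Hd. lra.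
    + rewrite (HK t), (HK 0); lra.
  - subst; auto.
  - destruct (fn_eq_Derive_eq f (fun _ => 0) 0 t) as [K HK]; auto.
    + apply Hc; lra.
    + intros y Hy. eexists. apply Hd. lra.
    + intros y Hy. apply ex_derive_const.
    + intros y Hy. rewrite Derive_const. apply is_derive_unique, Hd. lra.
    + rewrite (HK t), (HK 0); lra.
Qed.

Lemma K1 n : (/2) * bb n = 1 * PS_derive bb n + (-1) * PS_incr_1 (PS_derive bb) n + 0 * bb n.
Proof.
  destruct n as [|m].
  - unfold PS_derive, PS_incr_1, zero. simpl. rewrite bb_S, bb_0. simpl. field.
  - unfold PS_derive, PS_incr_1. rewrite (bb_S (S m)). rewrite !S_INR. field. pose proof (pos_INR m). lra.
Qed.

Lemma K2 n : bb n = 1 * cc n + 2 * PS_incr_1 (PS_derive cc) n + 0 * bb n.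
Proof.
  destruct n as [|m].
  - unfold PS_incr_1, zero, cc. simpl. field.
  - unfold PS_derive, PS_incr_1, cc. rewrite !S_INR. field. pose proof (pos_INR m). lra.
Qed.

Lemma K3 n : cc n = 2 * PS_derive aa n + (-2) * PS_incr_1 (PS_derive aa) n + (-1) * aa n.
Proof.
  destruct n as [|m].
  - unfold PS_derive, PS_incr_1, zero, cc, aa. simpl. rewrite bb_S, bb_0. simpl. field.
  - unfold PS_derive, PS_incr_1, cc, aa. rewrite (bb_S (S m)).
    change (Hbar2 (S (S m))) with (Hbar2 (S m) + 1 / (2 * INR (S (S m)) - 1) ^ 2).
    rewrite !S_INR. pose proof (pos_INR m). field. lra.
Qed.

Lemma bb_abs n : Rabs (bb n) <= 2.
Proof. pose proof (bb_bounds n). rewrite Rabs_pos_eq; lra. Qed.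
Lemma cc_abs n : Rabs (cc n) <= 2.
Proof.
  pose proof (bb_bounds n). pose proof (pos_INR n). unfold cc.
  rewrite Rabs_pos_eq. apply Rle_trans with (bb n); [|lra].
  unfold Rdiv. rewrite <- (Rmult_1_r (bb n)) at 2. apply Rmult_le_compat_l. lra.
  rewrite <- Rinv_1. apply Rinv_le_contravar; lra.
  apply Rlt_le, Rdiv_lt_0_compat; lra.
Qed.
Lemma aa_abs n : Rabs (aa n) <= 2.
Proof.
  pose proof (bb_bounds n). pose proof (Hbar2_bounds n). pose proof (pos_INR n). unfold aa.
  assert (0 <= 2 / (2 * INR n + 1)) by (apply Rlt_le, Rdiv_lt_0_compat; lra).
  rewrite Rabs_pos_eq by nra. nra.
Qed.

Lemma PSeries_scal' c a x : PSeries (fun n => c * a n) x = c * PSeries a x.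
Proof. exact (PSeries_scal c a x). Qed.

Lemma rad_d (p : nat -> R) x : (forall n, Rabs (p n) <= 2) -> Rabs x < 1 -> Rbar_lt (Rabs x) (CV_radius (PS_derive p)).
Proof. intros. rewrite CV_radius_derive. apply in_rad; auto. Qed.
Lemma rad_id (p : nat -> R) x : (forall n, Rabs (p n) <= 2) -> Rabs x < 1 -> Rbar_lt (Rabs x) (CV_radius (PS_incr_1 (PS_derive p))).
Proof. intros. rewrite CV_radius_incr_1, CV_radius_derive. apply in_rad; auto. Qed.

Lemma idB x : Rabs x < 1 -> (1 - x) * PSeries (PS_derive bb) x = / 2 * PSeries bb x.
Proof.
  intro Hx. rewrite <- (PSeries_scal' (/2) bb x).
  rewrite (PS_lin3 (PS_derive bb) (PS_incr_1 (PS_derive bb)) bb (fun n => /2 * bb n) 1 (-1) 0 x).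
  - rewrite PSeries_incr_1. ring.
  - apply CV_radius_inside, rad_d; auto using bb_abs.
  - apply CV_radius_inside, rad_id; auto using bb_abs.
  - apply CV_radius_inside, in_rad; auto using bb_abs.
  - exact K1.
Qed.

Lemma B_closed u : -1 < u < 1 -> sqrt (1 - u) * PSeries bb u = 1.
Proof.
  intro Hu.
  rewrite (const0 (fun u => sqrt (1 - u) * PSeries bb u)).
  - rewrite PSeries_0, bb_0, Rminus_0_r, sqrt_1. ring.
  - intros x Hx.
    assert (Hs : is_derive (fun x => sqrt (1 - x)) x (-1 / (2 * sqrt (1 - x)))).
    { apply (is_derive_sqrt (fun x => 1 - x)). auto_derive. auto. ring. lra. }
    assert (Hax : Rabs x < 1) by (apply Rabs_def1; lra).
    pose proof (is_derive_PSeries bb x (in_rad _ _ bb_abs Hax)) as HB.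
    pose proof (is_derive_mult _ _ _ _ _ Hs HB Rmult_comm) as H.
    replace 0 with (plus (mult (-1/(2*sqrt(1-x))) (PSeries bb x)) (mult (sqrt(1-x)) (PSeries (PS_derive bb) x))).
    exact H.
    unfold plus, mult; simpl.
    pose proof (idB x Hax) as HI.
    assert (Hsq : sqrt (1 - x) * sqrt (1 - x) = 1 - x) by (apply sqrt_sqrt; lra).
    assert (Hsp : 0 < sqrt (1 - x)) by (apply sqrt_lt_R0; lra).
    replace (PSeries bb x) with (2 * (sqrt (1 - x) * sqrt (1 - x)) * PSeries (PS_derive bb) x) by (rewrite Hsq; lra).
    field. lra.
  - exact Hu.
Qed.

Lemma idC x : Rabs x < 1 -> PSeries bb x = PSeries cc x + 2 * (x * PSeries (PS_derive cc) x).
Proof.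
  intro Hx.
  rewrite (PS_lin3 cc (PS_incr_1 (PS_derive cc)) bb bb 1 2 0 x).
  - rewrite PSeries_incr_1. ring.
  - apply CV_radius_inside, in_rad; auto using cc_abs.
  - apply CV_radius_inside, rad_id; auto using cc_abs.
  - apply CV_radius_inside, in_rad; auto using bb_abs.
  - exact K2.
Qed.

Lemma asin_der x : -1 < x < 1 -> is_derive asin x (1 / sqrt (1 - x ^ 2)).
Proof.
  intro Hx. apply is_derive_Reals. apply (derive_pt_eq_1 _ _ _ (derivable_pt_asin x Hx)).
  rewrite derive_pt_asin. unfold Rsqr. simpl. rewrite Rmult_1_r. reflexivity.
Qed.

Lemma sq_lt1 x : -1 < x < 1 -> Rabs (x ^ 2) < 1 /\ -1 < x ^ 2 < 1 /\ 0 <= x ^ 2.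
Proof.
  intro Hx. assert (0 <= x ^ 2) by (simpl; nra). assert (x ^ 2 < 1) by (simpl; nra).
  rewrite Rabs_pos_eq; lra.
Qed.

Lemma sq_der (f : R -> R) x d : is_derive f (x ^ 2) d -> is_derive (fun t => f (t ^ 2)) x (2 * x * d).
Proof.
  intro H. assert (Hs : is_derive (fun t => t ^ 2) x (2 * x)) by (auto_derive; auto; ring).
  pose proof (is_derive_comp f (fun t => t ^ 2) x d (2 * x) H Hs) as H2. exact H2.
Qed.

Lemma asin_series t : -1 < t < 1 -> t * PSeries cc (t ^ 2) = asin t.
Proof.
  intro Ht.
  enough (t * PSeries cc (t ^ 2) - asin t = 0) by lra.
  rewrite (const0 (fun t => t * PSeries cc (t ^ 2) - asin t)).
  - rewrite asin_0. ring.
  - intros x Hx. destruct (sq_lt1 x Hx) as [Hua [Hu Hu0]].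
    pose proof (sq_der _ x _ (is_derive_PSeries cc (x ^ 2) (in_rad _ _ cc_abs Hua))) as Hc.
    assert (Hid : is_derive (fun t : R => t) x 1) by (auto_derive; auto).
    pose proof (is_derive_mult _ _ _ _ _ Hid Hc Rmult_comm) as Hm.
    pose proof (is_derive_minus _ _ _ _ _ Hm (asin_der x Hx)) as H.
    replace 0 with (minus (plus (mult 1 (PSeries cc (x ^ 2))) (mult x (2 * x * PSeries (PS_derive cc) (x ^ 2)))) (1 / sqrt (1 - x ^ 2))).
    exact H.
    pose proof (B_closed (x ^ 2) Hu) as HB. rewrite (idC _ Hua) in HB.
    assert (Hsp : 0 < sqrt (1 - x ^ 2)) by (apply sqrt_lt_R0; lra).
    replace (1 / sqrt (1 - x ^ 2)) with (PSeries cc (x ^ 2) + 2 * (x ^ 2 * PSeries (PS_derive cc) (x ^ 2))).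
    unfold minus, plus, mult, opp; simpl. ring.
    apply (Rmult_eq_reg_l (sqrt (1 - x ^ 2))); [|lra]. rewrite HB. field. lra.
  - exact Ht.
Qed.

Lemma idA x : Rabs x < 1 -> PSeries cc x = 2 * PSeries (PS_derive aa) x + (-2) * (x * PSeries (PS_derive aa) x) + (-1) * PSeries aa x.
Proof.
  intro Hx.
  rewrite (PS_lin3 (PS_derive aa) (PS_incr_1 (PS_derive aa)) aa cc 2 (-2) (-1) x).
  - rewrite PSeries_incr_1. ring.
  - apply CV_radius_inside, rad_d; auto using aa_abs.
  - apply CV_radius_inside, rad_id; auto using aa_abs.
  - apply CV_radius_inside, in_rad; auto using aa_abs.
  - exact K3.
Qed.

Lemma plus_R (a b : R) : plus a b = a + b. Proof. reflexivity. Qed.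
Lemma mult_R (a b : R) : mult a b = a * b. Proof. reflexivity. Qed.
Lemma minus_R (a b : R) : minus a b = a - b. Proof. reflexivity. Qed.
Lemma mult_R2 (a b : R) : @mult (AbsRing.Ring R_AbsRing) a b = a * b. Proof. reflexivity. Qed.
Lemma opp_R (a : R) : opp a = - a. Proof. reflexivity. Qed.

Lemma main_series t : -1 < t < 1 -> sqrt (1 - t ^ 2) * PSeries aa (t ^ 2) = asin t ^ 2 / 2.
Proof.
  intro Ht.
  enough (sqrt (1 - t ^ 2) * PSeries aa (t ^ 2) - / 2 * asin t ^ 2 = 0) by lra.
  rewrite (const0 (fun t => sqrt (1 - t ^ 2) * PSeries aa (t ^ 2) - / 2 * asin t ^ 2)).
  - replace (0 ^ 2) with 0 by ring. rewrite PSeries_0, asin_0. unfold aa. simpl Hbar2. ring.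
  - intros x Hx. destruct (sq_lt1 x Hx) as [Hua [Hu Hu0]].
    assert (Hs : is_derive (fun x => sqrt (1 - x ^ 2)) x ((- 2 * x) / (2 * sqrt (1 - x ^ 2)))).
    { apply (is_derive_sqrt (fun x => 1 - x ^ 2)). auto_derive. auto. ring. lra. }
    pose proof (sq_der _ x _ (is_derive_PSeries aa (x ^ 2) (in_rad _ _ aa_abs Hua))) as Ha.
    pose proof (is_derive_mult _ _ _ _ _ Hs Ha Rmult_comm) as Hm.
    pose proof (is_derive_scal _ _ (/2) _ (is_derive_pow asin 2 x _ (asin_der x Hx))) as Hp.
    pose proof (is_derive_minus _ _ _ _ _ Hm Hp) as H.
    match type of H with is_derive _ _ ?D => replace 0 with D end.
    exact H.
    pose proof (asin_series x Hx) as HS. rewrite (idA _ Hua) in HS.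
    assert (Hsp : 0 < sqrt (1 - x ^ 2)) by (apply sqrt_lt_R0; lra).
    assert (Hsq : sqrt (1 - x ^ 2) * sqrt (1 - x ^ 2) = 1 - x ^ 2) by (apply sqrt_sqrt; lra).
    rewrite <- HS.
    match goal with |- ?a = ?b => change (@eq R a b) end.
    rewrite ?plus_R, ?mult_R, ?minus_R, ?opp_R; simpl pred; simpl INR.
    match goal with |- ?E = 0 => replace E with ((2 * x * PSeries (PS_derive aa) (x ^ 2)) * (sqrt (1 - x ^ 2) * sqrt (1 - x ^ 2) - 1 + x ^ 2) / sqrt (1 - x ^ 2)) end.
    rewrite Hsq. replace (1 - x ^ 2 - 1 + x ^ 2) with 0 by ring. unfold Rdiv. ring.
    match goal with |- ?a = ?b => change (@eq R a b) end. rewrite ?mult_R. change (@mult (AbsRing.Ring R_AbsRing)) with Rmult. field. lra.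
  - exact Ht.
Qed.

Lemma pow_div' (a b : R) k : b <> 0 -> (a / b) ^ k = a ^ k / b ^ k.
Proof. intro Hb. induction k. simpl. field. simpl. rewrite IHk. field. split; auto. apply pow_nonzero; auto. Qed.

Lemma inf_ext (f g : nat -> R) l l' : (forall n, f n = g n) -> l = l' -> infinite_sum f l -> infinite_sum g l'.
Proof.
  intros Hfg Hl H. subst. apply is_series_Reals. apply is_series_Reals in H.
  eapply is_series_ext; [exact Hfg|exact H].
Qed.

Lemma term_eq y k : term y k = C (2 * k) k * Hbar2 k * (y ^ 2 / 16) ^ k.
Proof. unfold term. rewrite pow_mult. f_equal. f_equal. field. Qed.

Lemma part1 x : 0 <= x < 2 -> infinite_sum (fun n => term x (S n)) (asin (x / 2) ^ 2 / sqrt (4 - x ^ 2)).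
Proof.
  intro Hx. set (t := x / 2). assert (Ht : -1 < t < 1) by (unfold t; lra).
  destruct (sq_lt1 t Ht) as [Hua [Hu Hu0]].
  pose proof (PSeries_correct _ _ (CV_radius_inside _ _ (in_rad _ _ aa_abs Hua))) as H.
  unfold is_pseries in H.
  apply is_series_Reals.
  assert (H2 : is_series (fun k => aa k * (t ^ 2) ^ k) (plus (PSeries aa (t ^ 2)) (aa 0%nat * (t ^ 2) ^ 0))).
  { replace (plus (PSeries aa (t ^ 2)) (aa 0%nat * (t ^ 2) ^ 0)) with (PSeries aa (t ^ 2)).
    eapply is_series_ext; [|exact H]. intro n. rewrite pow_n_pow. change (scal ((t ^ 2) ^ n) (aa n)) with ((t ^ 2) ^ n * aa n). change (@eq R ((t ^ 2) ^ n * aa n) (aa n * (t ^ 2) ^ n)). ring.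
    unfold aa. simpl Hbar2. rewrite plus_R. ring. }
  pose proof (is_series_incr_1 (fun k => aa k * (t ^ 2) ^ k) _ H2) as H3.
  replace (asin t ^ 2 / sqrt (4 - x ^ 2)) with (PSeries aa (t ^ 2)).
  - eapply is_series_ext; [|exact H3]. intro n. rewrite term_eq. unfold aa, bb. replace (x ^ 2 / 16) with ((t ^ 2) / 4) by (unfold t; field).
    rewrite (pow_div' (t ^ 2) 4) by lra. match goal with |- ?a = ?b => change (@eq R a b) end. field. apply pow_nonzero; lra.
  - pose proof (main_series t Ht) as HM.
    assert (Hsp : 0 < sqrt (1 - t ^ 2)) by (apply sqrt_lt_R0; lra).
    replace (4 - x ^ 2) with (4 * (1 - t ^ 2)) by (unfold t; field).
    rewrite sqrt_mult by lra. replace (sqrt 4) with 2.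
    replace (asin t ^ 2) with (2 * (sqrt (1 - t ^ 2) * PSeries aa (t ^ 2))) by lra. field. lra.
    replace 4 with (2 * 2) by ring. rewrite sqrt_square; lra.
Qed.

Lemma sqrt_lt2 y : 0 <= y < 4 -> 0 <= sqrt y < 2.
Proof.
  intro Hy. split. apply sqrt_pos.
  pose proof (sqrt_pos y). pose proof (sqrt_sqrt y (proj1 Hy)). nra.
Qed.

Theorem corollary1p2 :
  (forall x : R, 0 <= x < 2 ->
     infinite_sum (fun n => term x (S n)) (asin (x / 2) ^ 2 / sqrt (4 - x ^ 2)))
  /\ infinite_sum (fun n => C (2 * S n) (S n) * Hbar2 (S n) / 16 ^ (S n))
                  (PI ^ 2 / (36 * sqrt 3))
  /\ infinite_sum (fun n => C (2 * S n) (S n) * Hbar2 (S n) / 8 ^ (S n))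
                  (PI ^ 2 / (16 * sqrt 2))
  /\ infinite_sum (fun n => C (2 * S n) (S n) * 3 ^ (S n) * Hbar2 (S n) / 16 ^ (S n))
                  (PI ^ 2 / 9).
Proof.
  pose proof PI_RGT_0 as HPI.
  assert (H2 : sqrt 2 ^ 2 = 2) by (apply pow2_sqrt; lra).
  assert (H3 : sqrt 3 ^ 2 = 3) by (apply pow2_sqrt; lra).
  assert (H2p : 0 < sqrt 2) by (apply sqrt_lt_R0; lra).
  assert (H3p : 0 < sqrt 3) by (apply sqrt_lt_R0; lra).
  split; [exact part1|].
  split; [|split].
  - refine (inf_ext _ _ _ _ _ _ (part1 1 ltac:(lra))).
    + intro n. rewrite term_eq. replace (1 ^ 2 / 16) with (1 / 16) by field.
      rewrite pow_div' by lra. rewrite pow1. field. apply pow_nonzero; lra.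
    + replace (1 / 2) with (sin (PI / 6)) by (rewrite sin_PI6; reflexivity).
      rewrite asin_sin by lra. replace (4 - 1 ^ 2) with 3 by ring. field. lra.
  - refine (inf_ext _ _ _ _ _ _ (part1 (sqrt 2) _)).
    + intro n. rewrite term_eq. rewrite H2. replace (2 / 16) with (1 / 8) by field.
      rewrite pow_div' by lra. rewrite pow1. field. apply pow_nonzero; lra.
    + replace (sqrt 2 / 2) with (sin (PI / 4)).
      rewrite asin_sin by lra. rewrite H2. replace (4 - 2) with 2 by ring. field. lra.
      rewrite sin_PI4. rewrite <- (sqrt_sqrt 2) at 3 by lra. field. lra.
    + apply sqrt_lt2. lra.
  - refine (inf_ext _ _ _ _ _ _ (part1 (sqrt 3) _)).
    + intro n. rewrite term_eq. rewrite H3.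
      rewrite pow_div' by lra. field. apply pow_nonzero; lra.
    + replace (sqrt 3 / 2) with (sin (PI / 3)) by (rewrite sin_PI3; reflexivity).
      rewrite asin_sin by lra. rewrite H3. replace (4 - 3) with 1 by ring. rewrite sqrt_1. field.
    + apply sqrt_lt2. lra.
Qed.
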